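(* Let $\mathbf{J}\in\mathbb{R}^{n\times n}$ be a real symmetric matrix with zero diagonal, and let $\alpha,\beta>0$ be such that $\lambda_{\min}(\mathbf{J}+\alpha\mathbf{I})>0$. Let $\{\boldsymbol{x}^{(k)}\}_{k\ge0}$ be the DOCH iterates starting from an arbitrary $\boldsymbol{x}^{(0)}\in\mathbb{R}^n$. Then there exists $\sigma>0$ such that for all $k\ge1$, $$\|\nabla\mathcal{H}(\boldsymbol{x}^{(k)})\|_2\le\sigma\|\boldsymbol{x}^{(k)}-\boldsymbol{x}^{(k-1)}\|_2.$$
   Context: Let $f(\boldsymbol{x})=\frac{\beta}{4}\sum_i x_i^4$, $g(\boldsymbol{x})=\frac12\boldsymbol{x}^\top(\mathbf{J}+\alpha\mathbf{I})\boldsymbol{x}$ and $\mathcal{H}=f-g$. The DOCH iterates are defined by $\boldsymbol{x}^{(k+1)}$ being the minimizer of $F_k(\boldsymbol{x})=f(\boldsymbol{x})-g(\boldsymbol{x}^{(k)})-\nabla g(\boldsymbol{x}^{(k)})^\top(\boldsymbol{x}-\boldsymbol{x}^{(k)})$; explicitly, $\boldsymbol{x}^{(k+1)}=\varphi(\beta^{-1}(\mathbf{J}+\alpha\mathbf{I})\boldsymbol{x}^{(k)})$ with $\varphi$ the componentwise real cube root. *)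

(* Defs.v *)
From HB Require Import structures.
From mathcomp Require Import all_boot all_order all_algebra.
From mathcomp Require Import all_classical all_reals all_analysis.
Set Implicit Arguments. Unset Strict Implicit. Unset Printing Implicit Defensive.
Import Order.TTheory GRing.Theory Num.Theory.
Local Open Scope ring_scope.

Section DOCH.
Variables (R : realType) (n : nat).

Definition cbrt (t : R) : R :=
  if 0 <= t then powR t (3%:R^-1) else - powR (- t) (3%:R^-1).

(* vectors of R^n are row vectors 'rV[R]_n; x 0 i is the i-th coordinate *)
Definition mxv (M : 'M[R]_n) (x : 'rV[R]_n) : 'rV[R]_n :=
  \row_i \sum_j M i j * x 0 j.

Definition f_doch (beta : R) (x : 'rV[R]_n) : R :=
  beta / 4%:R * \sum_i x 0 i ^+ 4.

Definition g_doch (J : 'M[R]_n) (alpha : R) (x : 'rV[R]_n) : R :=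
  2%:R^-1 * \sum_i \sum_j x 0 i * (J + alpha%:M) i j * x 0 j.

Definition H_doch (J : 'M[R]_n) (alpha beta : R) (x : 'rV[R]_n) : R :=
  f_doch beta x - g_doch J alpha x.

Definition gradH (J : 'M[R]_n) (alpha beta : R) (x : 'rV[R]_n) : 'rV[R]_n :=
  \row_i derive1 (fun t : R => H_doch J alpha beta (x + t *: delta_mx 0 i)) 0.

Definition norm2 (x : 'rV[R]_n) : R := Num.sqrt (\sum_i x 0 i ^+ 2).

Definition doch_step (J : 'M[R]_n) (alpha beta : R) (x : 'rV[R]_n) : 'rV[R]_n :=
  \row_i cbrt (beta^-1 * mxv (J + alpha%:M) x 0 i).

Definition doch_iter (J : 'M[R]_n) (alpha beta : R) (x0 : 'rV[R]_n) (k : nat)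
  : 'rV[R]_n := iter k (doch_step J alpha beta) x0.

End DOCH.

(* Main.v *)
Require Import Defs.
From HB Require Import structures.
From mathcomp Require Import all_boot all_order all_algebra.
From mathcomp Require Import all_classical all_reals all_analysis.
From mathcomp Require Import lra.
Import Order.TTheory GRing.Theory Num.Theory.
Local Open Scope ring_scope.

Lemma cbrt3p (R : realType) (t : R) : 0 <= t -> (t `^ 3^-1) ^+ 3 = t.
Proof.
by move=> t0; rewrite -powR_mulrn ?powR_ge0 // -(powRrM t) mulVf ?pnatr_eq0 // powRr1.
Qed.
Lemma cbrt3 (R : realType) (t : R) : cbrt t ^+ 3 = t.
Proof.
rewrite /cbrt; case: ifP => t0; first exact: cbrt3p.
have t0' : 0 <= - t by rewrite oppr_ge0 ltW // ltNge t0.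
by rewrite exprNn cbrt3p // -signr_odd /= expr1 mulN1r opprK.
Qed.

Section S.
Variables (R : realType) (n : nat).

Lemma gradH_eq (J : 'M[R]_n) alpha beta x :
  (J + alpha%:M)^T = J + alpha%:M ->
  gradH J alpha beta x = \row_i (beta * x 0 i ^+ 3 - mxv (J + alpha%:M) x 0 i).
Proof.
move=> Msym; set M := J + alpha%:M.
apply/rowP => i; rewrite !mxE.
pose d j := (delta_mx 0 i : 'rV[R]_n) 0 j.
pose c j : {poly R} := (x 0 j)%:P + (d j)%:P * 'X.
pose P : {poly R} := (beta / 4%:R) *: \sum_j c j ^+ 4
   - 2%:R^-1 *: \sum_a \sum_b (c a * (M a b)%:P * c b).
have hc : forall t j, (c j).[t] = (x + t *: delta_mx 0 i) 0 j.
  by move=> t j; rewrite /c /d !mxE hornerD hornerMX !hornerC mulrC.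
transitivity (derive1 (horner P) 0).
  congr (derive1 _ _); apply/funext => t.
  rewrite /P /H_doch /f_doch /g_doch hornerD hornerN !hornerZ !horner_sum.
  congr (_ * _ - _ * _); apply: eq_bigr => a _.
    by rewrite horner_exp hc.
  rewrite horner_sum; apply: eq_bigr => b _.
  by rewrite !hornerM hornerC !hc.
rewrite derive1E derive_val.
have hc0 : forall j, (c j).[0] = x 0 j.
  by move=> j; rewrite hc scale0r addr0.
have hc' : forall j, (c j)^`() = (d j)%:P.
  by move=> j; rewrite /c derivD derivC add0r deriv_mulC derivX mulr1.
have e1 : forall j, (c j ^+ 4)^`().[0] = d j * x 0 j ^+ 3 * 4%:R.
  by move=> j; rewrite deriv_exp hc' hornerMn hornerM hornerC horner_exp hc0 mulr_natr.
have e2 : forall a b, (c a * (M a b)%:P * c b)^`().[0] =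
    d a * M a b * x 0 b + x 0 a * M a b * d b.
  move=> a b; rewrite !derivM derivC hc' mulr0 addr0 !hornerE hc' hornerC.
  done.
rewrite /P derivB !derivZ !(big_morph _ (@derivD R) (@deriv0 R)) hornerD hornerN !hornerZ !horner_sum.
have e3 : forall a, (\sum_b (c a * (M a b)%:P * c b))^`().[0] =
    \sum_b (d a * M a b * x 0 b + x 0 a * M a b * d b).
  move=> a; rewrite (big_morph _ (@derivD R) (@deriv0 R)) horner_sum.
  by apply: eq_bigr => b _; rewrite e2.
transitivity (beta / 4%:R * \sum_j d j * x 0 j ^+ 3 * 4%:R - 2%:R^-1 *
   \sum_a \sum_b (d a * M a b * x 0 b + x 0 a * M a b * d b)).
  congr (_ - _ * _).
    by congr (_ * _); apply: eq_bigr => a _; exact: e1.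
  by apply: eq_bigr => a _; exact: e3.
have hd : forall F : 'I_n -> R, \sum_j d j * F j = F i.
  move=> F; rewrite (bigD1 i) //= big1 ?addr0.
    by rewrite /d mxE !eqxx mul1r.
  by move=> j ji; rewrite /d mxE (negbTE ji) andbF mul0r.
have Ms : forall a, M a i = M i a.
  by move=> a; have := congr1 (fun A : 'M[R]_n => A i a) Msym; rewrite mxE.
have -> : \sum_j d j * x 0 j ^+ 3 * 4%:R = x 0 i ^+ 3 * 4%:R.
  by rewrite -(hd (fun j => x 0 j ^+ 3 * 4%:R)); apply: eq_bigr => j _; rewrite mulrA.
have -> : \sum_a \sum_b (d a * M a b * x 0 b + x 0 a * M a b * d b)
   = 2%:R * \sum_j M i j * x 0 j.
  rewrite mulr2n mulrDl mul1r.
  under eq_bigr do rewrite big_split.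
  rewrite big_split; congr (_ + _).
    rewrite -(hd (fun a => \sum_b M a b * x 0 b)); apply: eq_bigr => a _.
    by rewrite mulr_sumr; apply: eq_bigr => b _; rewrite mulrA.
  apply: eq_bigr => a _.
  rewrite -Ms mulrC -(hd (fun b => x 0 a * M a b)); apply: eq_bigr => b _.
  by rewrite mulrC.
rewrite mulrA mulKf ?pnatr_eq0 //; congr (_ - _).
by rewrite mulrAC divfK ?pnatr_eq0.
Qed.

Lemma sqrt_le (a b : R) : 0 <= b -> a <= b ^+ 2 -> Num.sqrt a <= b.
Proof.
move=> hb hab; rewrite -(ger0_norm hb) -sqrtr_sqr ler_sqrt //.
exact: sqr_ge0.
Qed.

Lemma norm2_ge0 (v : 'rV[R]_n) : 0 <= norm2 v.
Proof. exact: sqrtr_ge0. Qed.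

Lemma abs_le_norm (v : 'rV[R]_n) j : `|v 0 j| <= norm2 v.
Proof.
rewrite /norm2 -sqrtr_sqr ler_sqrt ?sumr_ge0 // => [|k _]; last exact: sqr_ge0.
rewrite (bigD1 j) //= lerDl sumr_ge0 // => k _; exact: sqr_ge0.
Qed.

Lemma norm_le_sum (w : 'rV[R]_n) : norm2 w <= \sum_i `|w 0 i|.
Proof.
apply: sqrt_le; first by apply: sumr_ge0 => i _.
suff : 0 <= \sum_i `|w 0 i| /\ \sum_i w 0 i ^+ 2 <= (\sum_i `|w 0 i|) ^+ 2 by case.
apply: (big_ind2 (fun a b => 0 <= b /\ a <= b ^+ 2)).
- by rewrite expr0n.
- move=> a1 b1 a2 b2 [h1 h1'] [h2 h2']; split; first exact: addr_ge0.
  nra.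
- by move=> i _; rewrite real_normK ?num_real.
Qed.

Lemma mxv_bound (M : 'M[R]_n) (v : 'rV[R]_n) :
  norm2 (mxv M v) <= (\sum_i \sum_j `|M i j|) * norm2 v.
Proof.
apply: (le_trans (norm_le_sum _)); rewrite mulr_suml; apply: ler_sum => i _.
rewrite mxE; apply: (le_trans (ler_norm_sum _ _ _)); rewrite mulr_suml.
apply: ler_sum => j _; rewrite normrM; apply: ler_wpM2l => //.
exact: abs_le_norm.
Qed.

Lemma norm2N (v : 'rV[R]_n) : norm2 (- v) = norm2 v.
Proof. by rewrite /norm2; congr Num.sqrt; apply: eq_bigr => i _; rewrite mxE sqrrN. Qed.

End S.

Theorem propositionS9 (R : realType) (n : nat) (J : 'M[R]_n) (alpha beta : R) :
  J^T = J ->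
  (forall i, J i i = 0) ->
  0 < alpha -> 0 < beta ->
  (* lambda_min(J + alpha I) > 0: every eigenvalue of J + alpha I is positive *)
  (forall a : R, eigenvalue (J + alpha%:M) a -> 0 < a) ->
  forall x0 : 'rV[R]_n,
  exists sigma : R, 0 < sigma /\
    forall k : nat, (1 <= k)%N ->
      norm2 (gradH J alpha beta (doch_iter J alpha beta x0 k))
      <= sigma * norm2 (doch_iter J alpha beta x0 k - doch_iter J alpha beta x0 k.-1).
Proof.
move=> Jsym _ _ bpos _ x0.
set M := J + alpha%:M.
have Msym : M^T = M by rewrite /M linearD /= Jsym tr_scalar_mx.
set C := \sum_i \sum_j `|M i j|.
have C0 : 0 <= C by apply: sumr_ge0 => i _; apply: sumr_ge0.
exists (1 + C); split; first by apply: ltr_wpDr.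
case=> // k _.
set y := doch_iter J alpha beta x0 k.
change (norm2 (gradH J alpha beta (doch_step J alpha beta y)) <=
  (1 + C) * norm2 (doch_step J alpha beta y - y)).
rewrite gradH_eq //.
set z := doch_step J alpha beta y.
have -> : \row_i (beta * z 0 i ^+ 3 - mxv M z 0 i) = mxv M (y - z).
  apply/rowP => i; rewrite !mxE cbrt3 mulrA mulfV ?gt_eqF // mul1r.
  rewrite -sumrB; apply: eq_bigr => j _; rewrite !mxE mulrBr.
  done.
apply: (le_trans (@mxv_bound R n M (y - z))).
rewrite -opprB norm2N; apply: ler_wpM2r; first exact: norm2_ge0.
by rewrite lerDr.
Qed.
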